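(* Let $x,y\in\mathbb R^d$ with $\|x\|_2\le1$, $\|y\|_2\le1$, and let $\sigma\in C^1(\mathbb R)$ satisfy $\sigma(0)=0$ and $\|\sigma'\|_\infty\le1$. Let $a\sim\mathcal N(0,1)$ and $w\sim\mathcal N(0,I_d)$. Then for any $\varepsilon>0$: (i) $X_1:=\frac1{\varepsilon^2}\sigma(\varepsilon w^\top x)\sigma(\varepsilon w^\top y)$ satisfies $\|X_1\|_{\psi_1}\le C_{\psi,d}$; (ii) $X_2:=a^2\sigma'(\varepsilon w^\top x)\sigma'(\varepsilon w^\top y)\langle x,y\rangle$ satisfies $\|X_2\|_{\psi_1}\le C_{\psi,1}$.
   Context: The sub-exponential norm of a random variable $X$ is $\|X\|_{\psi_1}:=\inf\{s>0:\mathbb E\exp(|X|/s)\le2\}$. $C_{\psi,d}$ denotes the sub-exponential norm of a chi-square random variable with $d$ degrees of freedom. *)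

(* Defs.v *)
From HB Require Import structures.
From mathcomp Require Import all_boot all_order all_algebra.
From mathcomp Require Import all_classical all_reals all_analysis.
From mathcomp Require Export normal_distribution.
Set Implicit Arguments. Unset Strict Implicit. Unset Printing Implicit Defensive.
Import Order.TTheory GRing.Theory Num.Theory.
Import numFieldNormedType.Exports.
Local Open Scope classical_set_scope.
Local Open Scope ring_scope.

(* Sub-exponential (psi_1) norm:
   ||X||_{psi_1} = inf { s > 0 : E exp(|X|/s) <= 2 }  (in the extended reals;
   inf of the empty set is +oo). *)
Definition psi1_norm {d} {T : measurableType d} {R : realType}
  (P : probability T R) (X : T -> R) : \bar R :=
  ereal_inf [set s%:E | s in [set s : R | 0 < s /\
     (\int[P]_t (expR (`|X t| / s))%:E <= 2%:E)%E]].

Definition mutually_independent {d} {T : measurableType d} {R : realType}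
  (P : probability T R) (I : finType) (Z : I -> T -> R) : Prop :=
  forall B : I -> set R, (forall i, measurable (B i)) ->
    P (\bigcap_(i in [set: I]) (Z i @^-1` B i)) =
    (\prod_(i : I) P (Z i @^-1` B i))%E.

Definition std_gaussian {d} {T : measurableType d} {R : realType}
  (P : probability T R) (X : T -> R) : Prop :=
  measurable_fun setT X /\
  forall A : set R, measurable A -> P (X @^-1` A) = normal_prob 0 1 A.

(* Main.v *)
Require Import Defs.
From HB Require Import structures.
From mathcomp Require Import all_boot all_order all_algebra.
From mathcomp Require Import all_classical all_reals all_analysis.
From mathcomp Require Import ring lra.
Import Order.TTheory GRing.Theory Num.Theory.
Import numFieldNormedType.Exports.
Local Open Scope classical_set_scope.
Local Open Scope ring_scope.

Lemma int_mono {d} {T : measurableType d} {R : realType} (P : probability T R)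
  (f g : T -> \bar R) : (forall t, (0 <= f t)%E) -> (forall t, (f t <= g t)%E) ->
  (\int[P]_t f t <= \int[P]_t g t)%E.
Proof.
move=> f0 fg; have g0 t : (0 <= g t)%E by apply: le_trans (f0 t) (fg t).
rewrite !ge0_integralTE //; apply: ereal_sup_le => _ [h hf <-].
exists h => // t; exact: le_trans (hf t) (fg t).
Qed.

Lemma psi1_mono {d} {T : measurableType d} {R : realType} (P : probability T R)
  (X Y : T -> R) : (forall t, `|X t| <= `|Y t|) -> (psi1_norm P X <= psi1_norm P Y)%E.
Proof.
move=> XY; apply: ereal_inf_le_tmp => _ [s [s0 hs] <-]; exists s => //; split => //.
apply: le_trans hs; apply: int_mono => t; first by rewrite lee_fin expR_ge0.
rewrite lee_fin ler_expR ler_wpM2r // invr_ge0 ltW //.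
Qed.

Lemma lip {R : realType} (f : R -> R) : (forall t, derivable f t 1) -> f 0 = 0 ->
  (forall t, `|derive1 f t| <= 1) -> forall t, `|f t| <= `|t|.
Proof.
move=> hd f0 hb t.
have cf : continuous f by move=> z; apply/differentiable_continuous/derivable1_diffP.
have dr (z : R) : is_derive z 1 f (derive1 f z).
  by rewrite derive1E; apply: derivableP.
have key a b : a <= b -> `|f b - f a| <= b - a.
  move=> ab; have [c _ ->] := MVT_segment ab (fun z _ => dr z) (continuous_subspaceT cf).
  rewrite normrM (@ger0_norm _ (b - a)) ?subr_ge0 //.
  by rewrite -[X in _ <= X]mul1r ler_wpM2r // subr_ge0.
have [t0|t0] := leP 0 t.
  by rewrite (ger0_norm t0); have := key _ _ t0; rewrite f0 !subr0.
by rewrite (ltr0_norm t0); have := key _ _ (ltW t0); rewrite f0 !sub0r normrN.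
Qed.

Lemma cs {R : realType} n (u v : 'I_n -> R) :
  (\sum_i u i * v i) ^+ 2 <= (\sum_i u i ^+ 2) * (\sum_i v i ^+ 2).
Proof.
rewrite -subr_ge0.
have h : 0 <= \sum_i \sum_j (u i * v j - u j * v i) ^+ 2.
  by apply: sumr_ge0 => i _; apply: sumr_ge0 => j _; apply: sqr_ge0.
suff e : \sum_i \sum_j (u i * v j - u j * v i) ^+ 2 =
   2 * ((\sum_i u i ^+ 2) * (\sum_i v i ^+ 2) - (\sum_i u i * v i) ^+ 2).
  by rewrite e pmulr_rge0 in h.
have X1 : (\sum_i u i ^+ 2) * (\sum_i v i ^+ 2) = \sum_i \sum_j (u i ^+ 2 * v j ^+ 2).
  by rewrite mulr_suml; apply: eq_bigr => i _; rewrite mulr_sumr.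
have X2 : (\sum_i u i ^+ 2) * (\sum_i v i ^+ 2) = \sum_i \sum_j (u j ^+ 2 * v i ^+ 2).
  by rewrite mulrC mulr_suml; apply: eq_bigr => i _; rewrite mulr_sumr; apply: eq_bigr => j _; rewrite mulrC.
have Z : 2 * (\sum_i u i * v i) ^+ 2 = \sum_i \sum_j (2 * (u i * v i * (u j * v j))).
  rewrite expr2 mulr_suml mulr_sumr; apply: eq_bigr => i _; rewrite mulr_sumr mulr_sumr; apply: eq_bigr => j _; ring.
have -> : 2 * ((\sum_i u i ^+ 2) * (\sum_i v i ^+ 2) - (\sum_i u i * v i) ^+ 2) =
   (\sum_i u i ^+ 2) * (\sum_i v i ^+ 2) + (\sum_i u i ^+ 2) * (\sum_i v i ^+ 2) - 2 * (\sum_i u i * v i) ^+ 2 by ring.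
rewrite {1}X1 X2 Z -big_split -sumrB /=; apply: eq_bigr => i _.
rewrite -big_split -sumrB /=; apply: eq_bigr => j _; ring.
Qed.

Lemma nK {R : realType} (z : R) : `|z| ^+ 2 = z ^+ 2.
Proof. exact: real_normK (num_real z). Qed.

Lemma sq_le1 {R : realType} (s : R) : 0 <= s -> Num.sqrt s <= 1 -> s <= 1.
Proof.
move=> s0 h; have e := sqr_sqrtr s0.
suff : Num.sqrt s ^+ 2 <= 1 by rewrite e.
have := sqrtr_ge0 s; nra.
Qed.

Theorem lemma2 (R : realType) (dd : measure_display) (T : measurableType dd)
  (P : probability T R) (d : nat)
  (a : T -> R) (w : 'I_d -> T -> R)
  (ha : std_gaussian P a) (hw : forall i, std_gaussian P (w i))
  (hind : mutually_independent P
            (fun o : option 'I_d => match o with None => a | Some i => w i end))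
  (x y : 'I_d -> R)
  (hx : Num.sqrt (\sum_(i < d) x i ^+ 2) <= 1)
  (hy : Num.sqrt (\sum_(i < d) y i ^+ 2) <= 1)
  (sigma : R -> R)
  (hsd : forall t, derivable sigma t 1)
  (hsc : continuous (derive1 sigma))
  (hs0 : sigma 0 = 0)
  (hsb : forall t, `|derive1 sigma t| <= 1)
  (eps : R) (heps : 0 < eps) :
  let wx := fun u => \sum_(i < d) w i u * x i in
  let wy := fun u => \sum_(i < d) w i u * y i in
  let C_d := psi1_norm P (fun u => \sum_(i < d) w i u ^+ 2) in
  let C_1 := psi1_norm P (fun u => a u ^+ 2) in
  let X1 := fun u => eps ^-2 * (sigma (eps * wx u) * sigma (eps * wy u)) in
  let X2 := fun u => a u ^+ 2 * derive1 sigma (eps * wx u) * derive1 sigma (eps * wy u)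
                     * (\sum_(i < d) x i * y i) in
  (psi1_norm P X1 <= C_d)%E /\ (psi1_norm P X2 <= C_1)%E.
Proof.
move=> wx wy C_d C_1 X1 X2.
have SX0 : 0 <= \sum_(i < d) x i ^+ 2 by apply: sumr_ge0 => i _; apply: sqr_ge0.
have SY0 : 0 <= \sum_(i < d) y i ^+ 2 by apply: sumr_ge0 => i _; apply: sqr_ge0.
have SX1 := @sq_le1 _ _ SX0 hx.
have SY1 := @sq_le1 _ _ SY0 hy.
split.
- apply: psi1_mono => u.
  have W0 : 0 <= \sum_(i < d) w i u ^+ 2 by apply: sumr_ge0 => i _; apply: sqr_ge0.
  have cx := @cs _ d (fun i => w i u) x.
  have cy := @cs _ d (fun i => w i u) y.
  rewrite [X in _ <= X]ger0_norm //.
  have hp : `|wx u| ^+ 2 <= \sum_(i < d) w i u ^+ 2.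
    rewrite nK; apply: le_trans cx _; rewrite -[X in _ <= X]mulr1; exact: ler_wpM2l.
  have hq : `|wy u| ^+ 2 <= \sum_(i < d) w i u ^+ 2.
    rewrite nK; apply: le_trans cy _; rewrite -[X in _ <= X]mulr1; exact: ler_wpM2l.
  have pq : `|wx u| * `|wy u| <= \sum_(i < d) w i u ^+ 2.
    have := normr_ge0 (wx u); have := normr_ge0 (wy u); nra.
  apply: le_trans pq.
  have l1 := @lip _ sigma hsd hs0 hsb (eps * wx u).
  have l2 := @lip _ sigma hsd hs0 hsb (eps * wy u).
  rewrite /X1 normrM (@ger0_norm _ (eps ^-2)); last by rewrite invr_ge0 exprn_ge0 // ltW.
  rewrite normrM.
  apply: le_trans (_ : eps ^-2 * (`|eps * wx u| * `|eps * wy u|) <= _).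
    by apply: ler_wpM2l; [rewrite invr_ge0 exprn_ge0 // ltW | apply: ler_pM].
  rewrite !normrM (gtr0_norm heps) le_eqVlt; apply/orP; left; apply/eqP.
  by field; rewrite gt_eqF.
- apply: psi1_mono => u.
  have cxy := @cs _ d x y.
  have hS : `|\sum_(i < d) x i * y i| <= 1.
    have : `|\sum_(i < d) x i * y i| ^+ 2 <= 1.
      rewrite nK; apply: le_trans cxy _; nra.
    have := normr_ge0 (\sum_(i < d) x i * y i); nra.
  rewrite /X2 !normrM.
  have := hsb (eps * wx u); have := hsb (eps * wy u).
  have := normr_ge0 (derive1 sigma (eps * wx u)); have := normr_ge0 (derive1 sigma (eps * wy u)).
  have := normr_ge0 (a u ^+ 2); have := normr_ge0 (\sum_(i < d) x i * y i).
  move: hS; set A := `|a u ^+ 2|; set B := `|derive1 sigma (eps * wx u)|;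
    set C := `|derive1 sigma (eps * wy u)|; set D := `|\sum_(i < d) x i * y i|.
  move=> *.
  rewrite -[X in _ <= X]mulr1 -[X in _ <= X]mulr1 -[X in _ <= X]mulr1.
  apply: ler_pM => //; first by apply: mulr_ge0 => //; apply: mulr_ge0.
  apply: ler_pM => //; first by apply: mulr_ge0.
  by apply: ler_pM.
Qed.
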